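(* Let $\mathcal A$ be a (commutative or noncommutative, unital, nonzero) ring. Then $\mathcal A$ as a $\mathbb Z$-algebra is strongly simple if and only if $\mathcal A\simeq\mathbb Z/p\mathbb Z$ for some prime $p$.
   Context: An additive subgroup $M$ of a ring $\mathcal A$ is a (two-sided) Mathieu subspace if whenever $a\in\mathcal A$ satisfies $a^m\in M$ for all $m\ge1$, then for all $b,c\in\mathcal A$ there is $N$ with $ba^mc\in M$ for all $m\ge N$. $\mathcal A$ is strongly simple (as a $\mathbb Z$-algebra) if its only Mathieu subspaces are $0$ and $\mathcal A$. *)

(* Defs.v *)
From HB Require Import structures.
From mathcomp Require Import all_boot all_algebra.
Set Implicit Arguments. Unset Strict Implicit. Unset Printing Implicit Defensive.
Import GRing.Theory.
Local Open Scope ring_scope.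

Definition additive_subgroup (A : nzRingType) (M : A -> Prop) : Prop :=
  M 0 /\ (forall x y, M x -> M y -> M (x - y)).

(* Two-sided Mathieu subspace (as Z-module = additive subgroup). *)
Definition mathieu_subspace (A : nzRingType) (M : A -> Prop) : Prop :=
  additive_subgroup M /\
  forall a : A, (forall m : nat, (1 <= m)%N -> M (a ^+ m)) ->
    forall b c : A, exists N : nat, forall m : nat, (N <= m)%N -> M (b * a ^+ m * c).

Definition strongly_simple (A : nzRingType) : Prop :=
  forall M : A -> Prop, mathieu_subspace M ->
    (forall x, M x <-> x = 0) \/ (forall x, M x).

Definition ring_iso_Zp (A : nzRingType) (p : nat) : Prop :=
  exists f : A -> 'Z_p, monoid_morphism f /\ zmod_morphism f /\ bijective f.

(* Main.v *)
Require Import Defs.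
From HB Require Import structures.
From mathcomp Require Import all_boot all_algebra.
From Stdlib Require Import Classical.
From mathcomp Require Import ring zify.
Set Implicit Arguments. Unset Strict Implicit. Unset Printing Implicit Defensive.
Import GRing.Theory Num.Theory.
Local Open Scope ring_scope.

Lemma two_adic K : (0 < K)%N -> exists s r, odd r /\ K = (2 ^ s * r)%N.
Proof.
elim/ltn_ind: K => K IH Kpos.
case oK: (odd K); first by exists 0%N, K; rewrite expn0 mul1n.
have hK : K = (K./2).*2 by rewrite -[K in LHS]odd_double_half oK.
move: hK; move: (K./2) => h hK.
have h1 : (0 < h)%N by move: Kpos; rewrite hK -muln2; lia.
have h2 : (h < K)%N by move: Kpos; rewrite hK -muln2; lia.

have [s [r [or hr]]] := IH _ h2 h1.
by exists s.+1, r; split => //; rewrite hK hr -muln2 expnS mulnC mulnA.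
Qed.

Lemma int_pow_id (k J : int) (s t : nat) :
  (k * 2) ^+ (s + t.+1) = k ^+ (s + t.+1) * 2 ^+ t * 2 * 2 ^+ s.
Proof.
rewrite exprMn (exprD (2:int)) (exprS (2:int)).
move: (k ^+ _) (2 ^+ s) (2 ^+ t) => K2 S T; ring.
Qed.

Section S.
Variable A : nzRingType.

Lemma add_muln (M : A -> Prop) x n : additive_subgroup M -> M x -> M (x *+ n).
Proof.
move=> [M0 MB] Mx; elim: n => [|n IH]; first by rewrite mulr0n.
have Mo : M (- (x *+ n)) by rewrite -sub0r; apply: MB.
by rewrite mulrS -[x *+ n]opprK; apply: MB.
Qed.

Lemma ideal_mathieu (M : A -> Prop) : additive_subgroup M ->
  (forall y z, M y -> M (z * y) /\ M (y * z)) -> mathieu_subspace M.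
Proof.
move=> HM Hcl; split=> // a Ha b c; exists 1%N => -[//|m] _.
rewrite exprS; have Ma := Ha 1%N isT; rewrite expr1 in Ma.
have [_ H2] := Hcl _ (a ^+ m * c) Ma.
have [H3 _] := Hcl _ b H2; by rewrite !mulrA in H3 *.
Qed.

Hypothesis SS : strongly_simple A.

Lemma SS_ideal (M : A -> Prop) : additive_subgroup M ->
  (forall y z, M y -> M (z * y) /\ M (y * z)) ->
  (forall x, M x <-> x = 0) \/ (forall x, M x).
Proof. by move=> H1 H2; apply: SS; apply: ideal_mathieu. Qed.

Lemma sqz (x : A) : x * x = 0 -> x = 0.
Proof.
move=> xx.
pose M := fun y : A => exists k : int, y = x *~ k.
have HM : additive_subgroup M.
  split; first by exists 0; rewrite mulr0z.
  by move=> _ _ [k ->] [l ->]; exists (k - l); rewrite mulrzBr.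
have Mx : M x by exists 1; rewrite mulr1z.
have MM : mathieu_subspace M.
  split=> // a Ha b c; exists 2%N => -[//|[//|m]] _.
  have [k ak] := Ha 1%N isT; rewrite expr1 in ak.
  have a2 : a * a = 0 by rewrite ak mulrzAl mulrzAr xx !mul0rz.
  by exists 0; rewrite mulr0z !exprS [a * (a * _)]mulrA a2 mul0r mulr0 mul0r.
case: (SS MM) => [H|H]; first by apply/H.
have [k k1] := H 1.
have h : (x *~ k) * (x *~ k) = 0 by rewrite mulrzAl mulrzAr xx !mul0rz.
by rewrite -k1 mulr1 in h; have := oner_neq0 A; rewrite h eqxx.
Qed.

Lemma nat_unit n : (n%:R : A) = 0 \/ exists w : A, w * n%:R = 1.
Proof.
pose I := fun y : A => exists z, y = z * n%:R.
have HI : additive_subgroup I.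
  split; first by exists 0; rewrite mul0r.
  by move=> _ _ [z1 ->] [z2 ->]; exists (z1 - z2); rewrite mulrBl.
have Hcl : forall y z, I y -> I (z * y) /\ I (y * z).
  move=> _ z [z0 ->]; split; first by exists (z * z0); rewrite mulrA.
  by exists (z0 * z); rewrite -mulrA -commr_nat mulrA.
case: (SS_ideal HI Hcl) => [H|H].
  by left; apply/H; exists 1; rewrite mul1r.
by right; have [z z1] := H 1; exists z.
Qed.

Lemma int_unit k : (k%:~R : A) = 0 \/ exists w : A, w * k%:~R = 1.
Proof.
case: k => n; first exact: nat_unit.
rewrite NegzE intrN -pmulrn; case: (nat_unit n.+1) => [->|[w hw]]; first by left; rewrite oppr0.
by right; exists (- w); rewrite mulrNN.
Qed.

Lemma inv_central (c w : A) : (forall z, c * z = z * c) -> w * c = 1 ->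
  forall z, w * z = z * w.
Proof.
move=> hc hw z; have cw : c * w = 1 by rewrite hc.
by rewrite -[w * z]mulr1 -cw !mulrA -[w * z * c]mulrA -hc !mulrA hw mul1r.
Qed.

Lemma cent_idem (e : A) : e * e = e -> (forall z, e * z = z * e) -> e = 0 \/ e = 1.
Proof.
move=> ee hc.
pose I := fun y : A => exists z, y = e * z.
have HI : additive_subgroup I.
  split; first by exists 0; rewrite mulr0.
  by move=> _ _ [z1 ->] [z2 ->]; exists (z1 - z2); rewrite mulrBr.
have Hcl : forall y z, I y -> I (z * y) /\ I (y * z).
  move=> _ z [z0 ->]; split; last by exists (z0 * z); rewrite mulrA.
  by exists (z * z0); rewrite mulrA -hc mulrA.
case: (SS_ideal HI Hcl) => [H|H].
  by left; apply/H; exists 1; rewrite mulr1.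
right; have [z z1] := H 1.
by rewrite -[e]mulr1 z1 mulrA ee.
Qed.

Lemma idem (e : A) : e * e = e -> e = 0 \/ e = 1.
Proof.
move=> ee; apply: cent_idem => // z.
have h1 : (1 - e) * e = 0 by rewrite mulrBl mul1r ee subrr.
have h2 : e * (1 - e) = 0 by rewrite mulrBr mulr1 ee subrr.
have u0 : e * z * (1 - e) = 0.
  apply: sqz; rewrite !mulrA -[e * z * (1 - e) * e]mulrA h1 mulr0 !mul0r.
  by [].
have v0 : (1 - e) * z * e = 0.
  apply: sqz; rewrite !mulrA -[(1 - e) * z * e * (1 - e)]mulrA h2 mulr0 !mul0r.
  by [].
rewrite mulrBr mulr1 in u0; rewrite !mulrBl mul1r in v0.
move/eqP: u0; rewrite subr_eq0 => /eqP ->.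
by move/eqP: v0; rewrite subr_eq0 => /eqP ->.
Qed.


Lemma rational (x : A) : exists K J : int, (K%:~R : A) != 0 /\ x * K%:~R = J%:~R.
Proof.
apply: NNPP => NR.
pose M := fun y : A => exists k : int, y = x *~ k.
have HM : additive_subgroup M.
  split; first by exists 0; rewrite mulr0z.
  by move=> _ _ [k ->] [l ->]; exists (k - l); rewrite mulrzBr.
have key : forall k l : int, (x *~ k) * (x *~ k) = x *~ l -> x *~ k = 0.
  move=> k l hkl.
  set a := x *~ k in hkl *.
  have e1 : a * a * k%:~R = a * l%:~R.
    by rewrite hkl /a !mulrzr -!mulrzA mulrC.
  set y := a * k%:~R.
  have yy : y * y = y * l%:~R.
    rewrite /y -mulrA -(commr_int (a * k%:~R) k) !mulrA e1.
    by rewrite -!mulrA (commr_int (l%:~R) k).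
  have hy : y = 0 \/ y = l%:~R.
    case: (int_unit l) => [l0|[u hu]].
      by left; apply: sqz; rewrite yy l0 mulr0.
    have uc : forall z, u * z = z * u.
      by apply: (inv_central (c := l%:~R)) => // z; rewrite (commr_int z l).
    have lu : l%:~R * u = 1 by rewrite -uc.
    pose e := y * u.
    have ee : e * e = e.
      rewrite /e mulrA -[y * u * y]mulrA (uc y) mulrA yy -[y * l%:~R * u]mulrA lu.
      by rewrite mulr1.
    have ye : y = e * l%:~R by rewrite /e -mulrA hu mulr1.
    case: (idem ee) => [e0|e1'].
      by left; rewrite ye e0 mul0r.
    by right; rewrite ye e1' mul1r.
  have yx : y = x * (k * k)%:~R by rewrite /y /a -mulrzr intrM mulrA.
  case: (int_unit k) => [k0|[w hw]].
    by rewrite /a -mulrzr k0 mulr0.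
  have kk : (k * k)%:~R != 0 :> A.
    apply/eqP => kk0.
    have : w * w * (k * k)%:~R = 1 by rewrite intrM !mulrA -[w * w * _]mulrA hw mulr1 hw.
    by rewrite kk0 mulr0 => /eqP; rewrite eq_sym oner_eq0.
  exfalso; apply: NR; case: hy => [y0|yl].
    by exists (k * k), 0; split => //; rewrite -yx y0.
  by exists (k * k), l; split => //; rewrite -yx yl.
have MM : mathieu_subspace M.
  split=> // a Ha b c; exists 1%N => -[//|m] _.
  have [k ak] := Ha 1%N isT; have [l al] := Ha 2%N isT.
  rewrite expr1 in ak; rewrite expr2 ak in al.
  have a0 := key _ _ al; rewrite -ak in a0.
  by exists 0; rewrite a0 exprS mul0r mulr0 mul0r mulr0z.
case: (SS MM) => [H|H].
  have x0 : x = 0 by apply/H; exists 1; rewrite mulr1z.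
  by apply: NR; exists 1, 0; split; [exact: oner_neq0 | rewrite x0 mul0r].
apply: NR; have [k k1] := H 1; exists k, 1; split; last by rewrite mulrzr -k1.
by apply/eqP => k0; move: k1; rewrite -mulrzr k0 mulr0 => /eqP; rewrite oner_eq0.
Qed.


Lemma rational_nat (x : A) : exists (K : nat) (J : int), (K%:R : A) != 0 /\ x * K%:R = J%:~R.
Proof.
have [[n|n] [J [K0 hx]]] := rational x; first by exists n, J.
exists n.+1, (- J); move: K0 hx; rewrite NegzE intrN -pmulrn oppr_eq0 mulrN => K0 hx.
by split => //; rewrite intrN -hx opprK.
Qed.

Lemma intrX (z : int) n : ((z ^+ n)%:~R : A) = z%:~R ^+ n.
Proof. by rewrite rmorphXn. Qed.

Lemma intrMn (z : int) n : (z%:~R : A) *+ n = (z * n%:Z)%:~R.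
Proof. by rewrite pmulrn -mulrzA. Qed.

Lemma char0_false : (forall n, (0 < n)%N -> (n%:R : A) != 0) -> False.
Proof.
move=> ch0.
have intr_inj0 : forall z : int, (z%:~R : A) = 0 -> z = 0.
  case=> n.
    case: n => // n h; exfalso; move: (ch0 n.+1 isT); move/eqP; apply; exact: h.
  rewrite NegzE intrN -pmulrn => /eqP; rewrite oppr_eq0 => /eqP h; exfalso.
  by move/eqP: (ch0 n.+1 isT).
have unit_pos : forall z : int, z != 0 -> exists w : A, w * z%:~R = 1.
  move=> z z0; case: (int_unit z) => [/intr_inj0 h|//].
  by rewrite h eqxx in z0.
pose S := fun y : A => exists (v : nat) (j : int), odd v /\ y *+ v = j%:~R.
pose M := fun y : A => exists (v : nat) (k : int), odd v /\ y *+ v = (k * 2)%:~R.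
have MS : forall y z, M y -> S z -> M (y * z).
  move=> y z [v1 [k1 [o1 h1]]] [v2 [j2 [o2 h2]]].
  exists (v1 * v2)%N, (k1 * j2); split; first by rewrite oddM o1 o2.
  rewrite mulrnA -mulrnAl h1 -mulrnAr h2 -intrM; congr (_%:~R); ring.
have HM : additive_subgroup M.
  split; first by exists 1%N, 0; split; [done | rewrite mulr1n mul0r mulr0z].
  move=> y z [v1 [k1 [o1 h1]]] [v2 [k2 [o2 h2]]].
  exists (v1 * v2)%N, (k1 * v2%:Z - k2 * v1%:Z); split; first by rewrite oddM o1 o2.
  rewrite mulrnBl mulrnA h1 mulnC mulrnA h2.
  rewrite (intrMn (k1 * 2)) (intrMn (k2 * 2)) -intrB; congr (_%:~R); ring.
have HS2 : forall s : nat, exists ws : A, ws * ((2:int) ^+ s)%:~R = 1.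
  by move=> s; apply: unit_pos; rewrite expf_eq0 pnatr_eq0 andbF.
have MM : mathieu_subspace M.
  split=> // a Ha b c.
  have [v [k [ov av]]] := Ha 1%N isT; rewrite expr1 in av.
  have [K [J [K0 dK]]] := rational_nat (b * c).
  have Kpos : (0 < K)%N by case: (K) K0 => //; rewrite eqxx.
  have [s [r [or Ksr]]] := two_adic Kpos.
  exists s.+1 => m hm.
  have [t mE] : exists t, m = (s + t.+1)%N by exists (m - s.+1)%N; rewrite addnS -addSn subnKC.
  have [w hw] : exists w : A, w * v%:R = 1.
    by apply: (unit_pos v); case: (v) ov.
  have wc : forall z, w * z = z * w.
    by apply: (inv_central (c := v%:R)) => // z; rewrite (commr_nat z v).
  have aE : a = (k * 2)%:~R * w.
    by rewrite -av -mulr_natr -mulrA -(commr_nat w v) hw mulr1.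
  have ac : forall z, a * z = z * a.
    by move=> z; rewrite aE -mulrA wc mulrA -(commr_int z) mulrA.
  rewrite (commrX m (esym (ac b))) -mulrA.
  have [ws hws] := HS2 s.
  have dE : a ^+ m * (b * c) = (a ^+ m * ws) * ((b * c) * ((2:int) ^+ s)%:~R).
    rewrite -[RHS]mulrA; congr (_ * _).
    by rewrite (commr_int (b * c)) mulrA hws mul1r.
  rewrite dE; apply: MS.
    exists (v ^ m)%N, (k ^+ m * 2 ^+ t); split; first by rewrite oddX ov orbT.
    rewrite -mulrnAl -exprMn_n av -intrX mE (int_pow_id k J) intrM -[_ * _ * ws]mulrA.
    by rewrite -(commr_int ws) hws mulr1.
  exists r, J; split; first done.
  by rewrite rmorphXn -natrX mulr_natr -mulrnA -Ksr -mulr_natr dK.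
have [H|H] := SS MM.
  have M2 : M 2 by exists 1%N, 1; split; [done | rewrite mulr1n mul1r -pmulrn].
  have h2 := proj1 (H 2) M2.
  by move: (ch0 2%N isT); rewrite h2 eqxx.
have [v [k [ov hv]]] := H 1.
have e : (v%:Z - k * 2) = 0.
  by apply: intr_inj0; rewrite intrB -hv -pmulrn subrr.
have : v%:Z = k * 2 by apply/eqP; rewrite -subr_eq0 e.
move/(congr1 absz); rewrite abszM /= => vE.
by move: ov; rewrite vE oddM andbF.
Qed.


Lemma charp_iso (p : nat) : (0 < p)%N -> (p%:R : A) = 0 ->
  (forall n, (0 < n)%N -> (n < p)%N -> (n%:R : A) != 0) -> prime p /\ ring_iso_Zp A p.
Proof.
move=> p0 hp pmin.
have zge : forall n, (0 < n)%N -> (n%:R : A) = 0 -> (p <= n)%N.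
  move=> n n0 hn; rewrite leqNgt; apply/negP => np.
  by move: (pmin n n0 np); rewrite hn eqxx.
have p1 : (1 < p)%N.
  case: p p0 hp {zge pmin} => // -[|//] _ h.
  by move: (oner_neq0 A); rewrite -[1]mulr1n h eqxx.
have pp : prime p.
  apply/primeP; split => // d /dvdnP [k pE].
  have d0 : (0 < d)%N by case: (d) pE p0 => // ->; rewrite muln0.
  have k0 : (0 < k)%N by case: (k) pE p0 => // ->.
  have dle : (d <= p)%N by rewrite pE leq_pmull.
  have kle : (k <= p)%N by rewrite pE leq_pmulr.
  case: (nat_unit d) => [hd|[w hw]].
    by have := zge d d0 hd; rewrite /= => h; apply/orP; right; rewrite eqn_leq dle h.
  have hk : (k%:R : A) = 0.
    by rewrite -[k%:R]mulr1 -{2}hw mulrA -(commr_nat w k) -mulrA -natrM -pE hp mulr0.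
  have kp : k = p by apply/eqP; rewrite eqn_leq kle zge.
  apply/orP; left; apply/eqP; move: pE; rewrite kp -{1}[p]muln1 => /eqP.
  by rewrite eqn_pmul2l // => /eqP.
have natmod : forall n, (n%:R : A) = (n %% p)%N%:R.
  by move=> n; rewrite {1}(divn_eq n p) natrD natrM hp mulr0 add0r.
have nat_eq : forall n m, (n%:R : A) = m%:R -> (n %% p = m %% p)%N.
  move=> n m; rewrite (natmod n) (natmod m).
  have := ltn_pmod n p0; have := ltn_pmod m p0.
  move: (n %% p)%N (m %% p)%N => a b bp ap hab.
  case: (ltngtP a b) => // hlt; exfalso.
    have h0 : ((b - a)%:R : A) = 0 by rewrite natrB ?(ltnW hlt) // hab subrr.
    have h1 : (0 < b - a)%N by rewrite subn_gt0.
    have h2 : (b - a < p)%N by lia.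
    by move: (pmin _ h1 h2); rewrite h0 eqxx.
  have h0 : ((a - b)%:R : A) = 0 by rewrite natrB ?(ltnW hlt) // hab subrr.
  have h1 : (0 < a - b)%N by rewrite subn_gt0.
  have h2 : (a - b < p)%N by lia.
  by move: (pmin _ h1 h2); rewrite h0 eqxx.
have intmod : forall z : int, exists t : nat, (z%:~R : A) = t%:R.
  move=> z; exists `|(z %% p)%Z|%N.
  have pz : (p%:Z != 0) by case: (p) p0.
  rewrite {1}(divz_eq z p) intrD intrM -pmulrn hp mulr0 add0r.
  by rewrite pmulrn gez0_abs ?modz_ge0.
have Hn : forall x : A, exists t : nat, x == t%:R.
  move=> x; have [K [J [K0 hx]]] := rational_nat x.
  have npK : ~~ (p %| K)%N.
    apply/negP => /dvdnP [q KE]; move: K0; rewrite KE natrM hp mulr0 eqxx //.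
  have cop : coprime p K by rewrite prime_coprime.
  have [a _ ha] := Bezoutl K p0.
  rewrite (eqP cop) in ha.
  have h1 : (1 : A) + (a * K)%:R = 0.
    have : ((1 + a * K)%N%:R : A) = 0 by move: ha => /dvdnP [q ->]; rewrite natrM hp mulr0.
    by rewrite natrD mulr1n.
  have xE : x = (- (J * a%:Z))%:~R.
    have e : (1 : A) = - (a * K)%:R by apply/eqP; rewrite -addr_eq0 h1.
    have : x = x * (- (a * K)%:R) by rewrite -e mulr1.
    by move=> ->; rewrite mulrN natrM (commr_nat (a%:R)) mulrA hx intrN intrM -pmulrn.
  have [t ht] := intmod (- (J * a%:Z)); exists t; by rewrite xE ht.
split => //.
pose f := fun x : A => ((xchoose (Hn x))%:R : 'Z_p).
have gE : forall x, x = (xchoose (Hn x))%:R by move=> x; apply/eqP; exact: (xchooseP (Hn x)).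
have fE : forall t : nat, f t%:R = t%:R.
  move=> t; rewrite /f -(Zp_nat_mod p1) -[RHS](Zp_nat_mod p1); congr (_%:R).
  by apply: nat_eq; rewrite -gE.
have Hn' : forall x : A, exists t : nat, x = t%:R by move=> x; have [t /eqP] := Hn x; exists t.
have fD : forall x y, f (x + y) = f x + f y.
  by move=> x y; have [t ->] := Hn' x; have [u ->] := Hn' y; rewrite -natrD !fE natrD.
exists f; split; [split|split].
- by have := fE 1%N; rewrite !mulr1n.
- by move=> x y; have [t ->] := Hn' x; have [u ->] := Hn' y; rewrite -natrM !fE natrM.
- by move=> x y; apply/eqP; rewrite eq_sym subr_eq -fD subrK.
exists (fun z : 'Z_p => ((z : nat)%:R : A)).
  move=> x; have [t ->] := Hn' x; rewrite fE (val_Zp_nat p1).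
  by rewrite -natmod.
by move=> z; rewrite fE natr_Zp.
Qed.

End S.

Theorem corollary6p8 (A : nzRingType) :
  strongly_simple A <-> exists p : nat, prime p /\ ring_iso_Zp A p.
Proof.
split.
  move=> SS.
  case: (classic (exists n, (0 < n)%N && ((n%:R : A) == 0))) => [ex|nex].
    case: (ex_minnP ex) => p /andP [p0 /eqP hp] pmin.
    exists p; apply: charp_iso => // n n0 np; apply/negP => hn.
    by have := pmin n; rewrite n0 hn leqNgt np => /(_ isT).
  exfalso; apply: (char0_false SS) => n n0; apply/negP => hn.
  by apply: nex; exists n; rewrite n0 hn.
move=> [p [pp [f [[f1 fM] [fB fbij]]]]].
move=> M [[M0 MB] _].
have finj := bij_inj fbij.
have f0 : f 0 = 0 by rewrite -(subrr 0) fB subrr.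
have fN : forall x, f (- x) = - f x by move=> x; rewrite -sub0r fB f0 sub0r.
have fD : forall x y, f (x + y) = f x + f y.
  by move=> x y; rewrite -{1}[y]opprK fB fN opprK.
have fMn : forall x n, f (x *+ n) = f x *+ n.
  by move=> x; elim=> [|n IH]; rewrite ?mulr0n // !mulrS fD IH.
case: (classic (exists x, M x /\ x != 0)) => [[x [Mx x0]]|nx].
  right => y.
  have p1 := prime_gt1 pp.
  have fx0 : f x != 0 by apply: contra x0 => /eqP; rewrite -f0 => /finj ->.
  have ux : f x \is a GRing.unit.
    rewrite -(natr_Zp (f x)) unitZpE // prime_coprime //.
    have vp : ((f x : nat) < p)%N by rewrite -{2}(Zp_cast p1); exact: ltn_ord.
    have vn0 : (0 < (f x : nat))%N.
      rewrite lt0n; apply: contra fx0 => /eqP v0; apply/eqP; apply: val_inj; exact: v0.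
    by apply/negP => /(dvdn_leq vn0); rewrite leqNgt vp.
  pose n := ((f y / f x) : 'Z_p) : nat.
  have -> : y = x *+ n.
    apply: finj; rewrite fMn -mulr_natr natr_Zp mulrC divrK //.
  have MB' : forall a b, M a -> M b -> M (a + b).
    by move=> a b Ma Mb; rewrite -[b]opprK; apply: (MB) => //; rewrite -sub0r; apply: (MB).
  by elim: n => [|k IH]; rewrite ?mulr0n // mulrS; apply: MB'.
left => y; split; last by move=> ->.
move=> My; apply/eqP; apply: contraT => y0; exfalso; apply: nx; by exists y.
Qed.
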